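(* Let $G$ be a weighted graph. Let $F$ be a bipartite graph and let $\mathcal{H}$ be the class of all graphs that are weighted cross-bipartite swapping in $G$. Then every $\mathcal{H}$-blow-up $H$ of $F$ is bipartite swapping in $G$, i.e. $\hom(H,G)^2\le\hom(H\times K_2,G)$.
   Context: A weighted graph $G$ is a symmetric function $G:V(G)\times V(G)\to\mathbb{R}_{\ge0}$ on a finite set (loops allowed). For a graph $H$, $\hom(H,G)=\sum_{\phi:V(H)\to V(G)}\prod_{uv\in E(H)}G(\phi(u),\phi(v))$. The tensor product $H\times K_2$ has vertex set $V(H)\times\{1,2\}$ with $(u,i)\sim(v,j)$ iff $uv\in E(H)$ and $i\ne j$. A graph $H$ is weighted cross-bipartite swapping in $G$ if for all $\mathbf{a},\mathbf{b}:V(G)\to\mathbb{R}_{\ge0}$, \[\Big(\sum_{\phi:V(H)\to V(G)}\prod_{uv\in E(H)}G(\phi(u),\phi(v))\prod_{u}a_{\phi(u)}\Big)\Big(\sum_{\phi:V(H)\to V(G)}\prod_{uv\in E(H)}G(\phi(u),\phi(v))\prod_{u}b_{\phi(u)}\Big)\le \sum_{\psi:V(H)\times\{1,2\}\to V(G)}\prod_{xy\in E(H\times K_2)}G(\psi(x),\psi(y))\prod_{u\in V(H)}a_{\psi(u,1)}b_{\psi(u,2)}.\] For a class $\mathcal{H}$ and a graph $F$ on vertices $v_1,\dots,v_k$, an $\mathcal{H}$-blow-up of $F$ is obtained by choosing $H_1,\dots,H_k\in\mathcal{H}$, taking their disjoint union, and adding all edges between $V(H_i)$ and $V(H_j)$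 whenever $v_iv_j\in E(F)$. *)

(* Defs.v *)
From HB Require Import structures.
From mathcomp Require Import all_boot all_order all_algebra.
From mathcomp Require Import reals.
Set Implicit Arguments. Unset Strict Implicit. Unset Printing Implicit Defensive.
Import Order.TTheory GRing.Theory Num.Theory.
Local Open Scope ring_scope.

Record sgraph := SGraph {
  gV : finType;
  gE : rel gV;
  gE_sym : symmetric gE;
  gE_irr : irreflexive gE }.

Definition bipartite (F : sgraph) : Prop :=
  exists c : gV F -> bool, forall u v, gE u v -> c u != c v.

Section Hom.
Variables (R : realType) (W : finType) (w : W -> W -> R).

(* product over the (unordered) edges uv of (T, e) of w(phi u, phi v);
   each edge is counted once, via the ordering of vertices given by enum_rank *)
Definition edge_prod (T : finType) (e : rel T) (phi : T -> W) : R :=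
  \prod_(p : T * T | e p.1 p.2 && (enum_rank p.1 < enum_rank p.2)%N)
     w (phi p.1) (phi p.2).

Definition hom (T : finType) (e : rel T) : R :=
  \sum_(phi : {ffun T -> W}) edge_prod e phi.

Definition homw (T : finType) (e : rel T) (a : W -> R) : R :=
  \sum_(phi : {ffun T -> W}) edge_prod e phi * \prod_(u : T) a (phi u).

(* tensor product H x K_2 on vertex set T * bool (true = copy 1, false = copy 2) *)
Definition tensorK2 (T : finType) (e : rel T) : rel (T * bool) :=
  fun p q => e p.1 q.1 && (p.2 != q.2).

Definition wcb_swapping (T : finType) (e : rel T) : Prop :=
  forall a b : W -> R, (forall x, 0 <= a x) -> (forall x, 0 <= b x) ->
    homw e a * homw e b <=
    \sum_(psi : {ffun T * bool -> W})
       edge_prod (tensorK2 e) psi *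
       \prod_(u : T) (a (psi (u, true)) * b (psi (u, false))).

Definition b_swapping (T : finType) (e : rel T) : Prop :=
  hom e ^+ 2 <= hom (tensorK2 e).

End Hom.

(* The blow-up of F by the family Hs: vertex set is the disjoint union of the
   V(Hs i); edges inside each Hs i, plus all edges between V(Hs i) and V(Hs j)
   whenever ij is an edge of F. *)
Definition blowup_rel (F : sgraph) (Hs : gV F -> sgraph) :
  rel {i : gV F & gV (Hs i)} :=
  fun x y => ((tag x == tag y) && gE (tagged x) (tagged_as x y))
             || gE (tag x) (tag y).

(* Main.v *)
Require Import Defs.
From HB Require Import structures.
From mathcomp Require Import all_boot all_order all_algebra.
From mathcomp Require Import reals.
From mathcomp Require Import ring.
Import Order.TTheory GRing.Theory Num.Theory.
Local Open Scope ring_scope.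
Unset Strict Implicit. Unset Printing Implicit Defensive.
Section Gen.
Variables (R : realType) (W : finType) (w : W -> W -> R).
Hypothesis w_sym : forall x y, w x y = w y x.
Hypothesis w_ge0 : forall x y, 0 <= w x y.

Lemma edge_prod_ge0 (T : finType) (e : rel T) (f : T -> W) : 0 <= edge_prod w e f.
Proof. by apply: prodr_ge0 => p _. Qed.

Lemma EPsq (T : finType) (e : rel T) (esym : symmetric e) (eirr : irreflexive e) (f : T -> W) :
  edge_prod w e f ^+ 2 = \prod_(p : T * T | e p.1 p.2) w (f p.1) (f p.2).
Proof.
rewrite (bigID (fun p : T*T => (enum_rank p.1 < enum_rank p.2)%N)) /= expr2; congr (_ * _).
rewrite (reindex (fun p : T*T => (p.2,p.1))) /=; last by exists (fun p : T*T => (p.2,p.1)); case.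
apply: eq_big => [[x y]|[x y] _] /=; last by rewrite w_sym.
rewrite -leqNgt [e y x]esym; case exy: (e x y) => //=.
rewrite ltn_neqAle; case: eqP => //= /val_inj /enum_rank_inj exy'.
by rewrite exy' eirr in exy.
Qed.

End Gen.
Section Blocks.
Variables (R : realType) (W : finType) (w0 : W).
Variables (I S : finType) (blk : S -> I) (L : I -> finType) (emb : forall i, L i -> S).
Hypothesis emb_inj : forall i, injective (emb i).
Hypothesis blk_emb : forall i u, blk (emb i u) = i.
Hypothesis emb_surj : forall i x, blk x = i -> exists u, emb i u = x.

Lemma BP (P : pred I) (g : S -> R) :
  \prod_(x | P (blk x)) g x = \prod_(i | P i) \prod_(u : L i) g (emb i u).
Proof.
rewrite (partition_big blk P) //=; apply: eq_bigr => i Pi.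
rewrite -[RHS](big_imset _ (in2W (@emb_inj i))) /=.
apply: eq_bigl => x; apply/andP/imsetP => [[_ /eqP bx]|[u _ ->]].
  by have [u <-] := emb_surj _ _ bx; exists u.
by rewrite blk_emb eqxx Pi.
Qed.

Definition supp (P : pred I) (f : {ffun S -> W}) :=
  [forall x, ~~ P (blk x) ==> (f x == w0)].
Definition restr i (f : {ffun S -> W}) : {ffun L i -> W} := [ffun u => f (emb i u)].
Definition ext i (g : {ffun L i -> W}) : {ffun S -> W} :=
  [ffun x => if [pick u | emb i u == x] is Some u then g u else w0].

Lemma restr_ext i g : restr i (ext i g) = g.
Proof.
apply/ffunP => u; rewrite !ffunE; case: pickP => [u' /eqP /emb_inj -> //|].
by move/(_ u); rewrite eqxx.
Qed.

Lemma ext_restr i f : (ext i (restr i f) == f) = supp (pred1 i) f.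
Proof.
apply/eqP/forallP => [E x|H].
  apply/implyP => bx; rewrite -E ffunE; case: pickP => [u /eqP eu|//].
  by rewrite -eu /= blk_emb eqxx in bx.
apply/ffunP => x; rewrite !ffunE; case: pickP => [u /eqP <-|nx]; first by rewrite ffunE.
have := H x; rewrite /=; case: (blk x =P i) => [bx|nbx]; last by move=> /= /eqP ->.
have [u eu] := emb_surj _ _ bx.
by have := nx u; rewrite eu eqxx.
Qed.

Lemma bridge i (G : {ffun L i -> W} -> R) :
  \sum_(g : {ffun L i -> W}) G g = \sum_(f | supp (pred1 i) f) G (restr i f).
Proof.
rewrite (reindex_onto (restr i) (ext i)) /=; last by move=> g _; rewrite restr_ext.
by apply: eq_bigl => f; rewrite ext_restr.
Qed.

Lemma GenEq (P : pred I) (G : forall i, {ffun L i -> W} -> R) :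
  \sum_(f | supp P f) \prod_(i | P i) G i (restr i f) =
  \prod_(i | P i) \sum_(g : {ffun L i -> W}) G i g.
Proof.
under [RHS]eq_bigr => i _ do rewrite bridge.
rewrite (big_distr_big_dep [ffun => w0]) /=.
pose h (f : {ffun S -> W}) : {ffun I -> {ffun S -> W}} :=
  [ffun i => if P i then [ffun x => if blk x == i then f x else w0] else [ffun => w0]].
pose h' (F : {ffun I -> {ffun S -> W}}) : {ffun S -> W} := [ffun x => F (blk x) x].
rewrite (reindex_onto h h') /=; last first.
  move=> F /pfamilyP [sF inF]; apply/ffunP => i; rewrite ffunE.
  case: ifP => Pi; last first.
    by apply/eqP; apply: contraFT Pi => nF; have := subsetP sF i; rewrite inE eq_sym => /(_ nF).
  apply/ffunP => x; rewrite !ffunE; case: eqP => [<- //|/eqP bx].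
  by have := inF i Pi => /forallP /(_ x); rewrite bx => /eqP.
apply: eq_big => [f|f _].
  apply/forallP/andP => [sf|[_ /eqP E] x]; last first.
    by rewrite -E !ffunE; case: ifP => //= _; rewrite ffunE.
  split.
    apply/pfamilyP; split.
      by apply/subsetP => i; rewrite !inE ffunE; case: ifP => //; rewrite eqxx.
    move=> i Pi; apply/forallP => x; rewrite /= ffunE.
    rewrite (_ : P i = true) // ffunE.
    by case: (blk x =P i) => //= _; rewrite eqxx.
  apply/eqP/ffunP => x; rewrite !ffunE; case: ifP => [_|nP]; first by rewrite ffunE eqxx.
  by have := sf x; rewrite nP ffunE => /eqP.
apply: eq_bigr => i Pi; congr (G i _); apply/ffunP => u; rewrite !ffunE Pi ffunE blk_emb eqxx.
by [].
Qed.

Definition merge (P : pred I) (f1 f2 : {ffun S -> W}) : {ffun S -> W} :=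
  [ffun x => if P (blk x) then f1 x else f2 x].

Lemma restr_merge P f1 f2 i : restr i (merge P f1 f2) = if P i then restr i f1 else restr i f2.
Proof. by apply/ffunP => u; case: ifP => Pi; rewrite !ffunE blk_emb Pi. Qed.

Lemma Split (P : pred I) (Fn : {ffun S -> W} -> R) :
  \sum_f Fn f = \sum_(f2 | supp (predC P) f2) \sum_(f1 | supp P f1) Fn (merge P f1 f2).
Proof.
rewrite pair_big_dep /=.
pose mask (Q : pred I) (f : {ffun S -> W}) : {ffun S -> W} := [ffun x => if Q (blk x) then f x else w0].
rewrite (reindex_onto (fun p : {ffun S -> W} * {ffun S -> W} => merge P p.2 p.1)
   (fun f => (mask (predC P) f, mask P f))) /=; last first.
  by move=> f _; apply/ffunP => x; rewrite !ffunE /=; case: (P (blk x)).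
apply: eq_bigl => [[f2 f1]] /=.
apply/eqP/andP => [[<- <-]|[/forallP s2 /forallP s1]].
  by split; apply/forallP => x; rewrite /= !ffunE /=; case: (P (blk x)) => //=; rewrite ?eqxx.
congr (_, _); apply/ffunP => x; rewrite !ffunE /=.
  by have := s2 x; rewrite /= negbK; case: (P (blk x)) => //= /eqP ->.
by have := s1 x; case: (P (blk x)) => //= /eqP ->.
Qed.

Variables (w : W -> W -> R).
Hypothesis w_sym : forall x y, w x y = w y x.
Hypothesis w_ge0 : forall x y, 0 <= w x y.
Variables (eS : rel S) (eL : forall i, rel (L i)) (c : I -> bool).
Hypothesis eS_sym : symmetric eS.
Hypothesis eS_irr : irreflexive eS.
Hypothesis eL_sym : forall i, symmetric (eL i).
Hypothesis eL_irr : forall i, irreflexive (eL i).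
Hypothesis eS_emb : forall i u v, eS (emb i u) (emb i v) = eL i u v.
Hypothesis eS_cross : forall x y, eS x y -> blk x != blk y -> c (blk x) != c (blk y).

Lemma D1 (f : S -> W) : edge_prod w eS f =
  \prod_i edge_prod w (eL i) (fun u => f (emb i u)) *
  \prod_(p : S * S | c (blk p.1) && eS p.1 p.2 && (blk p.1 != blk p.2)) w (f p.1) (f p.2).
Proof.
apply/eqP; rewrite -(eqrXn2 (n:=2)) //; last first.
- by apply: mulr_ge0; apply: prodr_ge0 => *; rewrite ?edge_prod_ge0.
- exact: edge_prod_ge0.
rewrite EPsq // exprMn -prodrXl.
under [X in X * _]eq_bigr => i _ do rewrite EPsq //.
apply/eqP; rewrite (bigID (fun p : S * S => blk p.1 == blk p.2)) /=; congr (_ * _).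
  rewrite (partition_big (fun p : S * S => blk p.1) predT) //=; apply: eq_bigr => i _.
  transitivity (\prod_(p in [set (emb i q.1, emb i q.2) | q in [pred q : L i * L i | eL i q.1 q.2]])
      w (f p.1) (f p.2)).
    apply: eq_bigl => [[x y]] /=; apply/idP/imsetP => [/andP [/andP [exy /eqP bxy] /eqP bx]|].
      have [u eu] := emb_surj _ _ bx; have [v ev] := emb_surj i y (etrans (esym bxy) bx).
      by exists (u, v); rewrite /= ?eu ?ev // unfold_in /= -eS_emb eu ev.
    by move=> [[u v]]; rewrite inE /= => euv [-> ->]; rewrite eS_emb euv !blk_emb eqxx.
  rewrite big_imset /=; last by move=> [u1 v1] [u2 v2] _ _ [/emb_inj -> /emb_inj ->].
  by apply: eq_bigl => q; rewrite inE.
rewrite (bigID (fun p : S * S => c (blk p.1))) /= expr2; congr (_ * _).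
  by apply: eq_bigl => p; rewrite andbC andbA.
rewrite (reindex (fun p : S*S => (p.2,p.1))) /=; last by exists (fun p : S*S => (p.2,p.1)); case.
apply: eq_big => [[x y]|[x y] _] /=; last by rewrite w_sym.
rewrite [eS y x]eS_sym eq_sym; case exy: (eS x y); rewrite ?andbF //= andbT.
case bxy: (blk x != blk y); rewrite ?andbF //=.
by have := eS_cross _ _ exy bxy; case: (c (blk x)); case: (c (blk y)).
Qed.

End Blocks.
Lemma edge_prod_ext (R : realType) (W : finType) (w : W -> W -> R) (T : finType) (e : rel T) (f g : T -> W) :
  f =1 g -> edge_prod w e f = edge_prod w e g.
Proof. by move=> fg; apply: eq_bigr => p _; rewrite !fg. Qed.

Section Main.
Variables (R : realType) (W : finType) (w : W -> W -> R).
Hypothesis w_sym : forall x y, w x y = w y x.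
Hypothesis w_ge0 : forall x y, 0 <= w x y.
Variables (F : sgraph) (Hs : gV F -> sgraph).
Hypothesis Hs_swap : forall i, wcb_swapping w (@gE (Hs i)).
Variable c : gV F -> bool.
Hypothesis hc : forall u v, gE u v -> c u != c v.
Variable w0 : W.

Local Notation I := (gV F).
Local Notation T := {i : gV F & gV (Hs i)}.
Definition L1 (i : I) : finType := gV (Hs i).
Definition L2 (i : I) : finType := (gV (Hs i) * bool)%type.
Definition emb1 (i : I) (u : L1 i) : T := existT _ i u.
Definition emb2 (i : I) (q : L2 i) : T * bool := (emb1 i q.1, q.2).
Definition blk1 (x : T) : I := tag x.
Definition blk2 (x : T * bool) : I := tag x.1.
Local Notation eS := (@blowup_rel F Hs).

Lemma emb1_inj i : injective (@emb1 i).
Proof. by move=> u v /(congr1 (tagged_as (emb1 i u))); rewrite !tagged_asE. Qed.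
Lemma emb2_inj i : injective (@emb2 i).
Proof. by move=> [u s] [v t] [/emb1_inj -> ->]. Qed.
Lemma blk_emb1 i u : blk1 (@emb1 i u) = i. Proof. by []. Qed.
Lemma blk_emb2 i u : blk2 (@emb2 i u) = i. Proof. by []. Qed.
Lemma emb1_surj i x : blk1 x = i -> exists u, @emb1 i u = x.
Proof. by case: x => k v /= <-; exists v. Qed.
Lemma emb2_surj i x : blk2 x = i -> exists u, @emb2 i u = x.
Proof. by case: x => [[k v] s] /= <-; exists (v, s). Qed.

Lemma eS_sym : symmetric eS.
Proof.
move=> [i u] [j v]; rewrite /blowup_rel /= eq_sym; case: (j =P i) => /= [ji|_]; last exact: gE_sym.
by subst j; rewrite !tagged_asE gE_sym.
Qed.
Lemma eS_irr : irreflexive eS.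
Proof. by move=> [i u]; rewrite /blowup_rel /= eqxx tagged_asE !gE_irr. Qed.
Lemma eS_emb1 i u v : eS (@emb1 i u) (@emb1 i v) = gE u v.
Proof. by rewrite /blowup_rel /= eqxx tagged_asE gE_irr orbF. Qed.
Lemma eS_diff x y : blk1 x != blk1 y -> eS x y = gE (blk1 x) (blk1 y).
Proof. by rewrite /blowup_rel => /negbTE ->. Qed.
Lemma gE_diff (i j : I) : gE i j -> i != j.
Proof. by apply: contraTneq => ->; rewrite gE_irr. Qed.

Lemma prod_pair (A B : finType) (G : A * B -> R) :
  \prod_(q : A * B) G q = \prod_(a : A) \prod_(b : B) G (a, b).
Proof. by rewrite pair_big; apply: eq_big => // -[]. Qed.

Lemma tK2_sym (U : finType) (e : rel U) : symmetric e -> symmetric (tensorK2 e).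
Proof. by move=> es p q; rewrite /tensorK2 es eq_sym. Qed.
Lemma tK2_irr (U : finType) (e : rel U) : irreflexive (tensorK2 e).
Proof. by move=> p; rewrite /tensorK2 eqxx andbF. Qed.

Lemma EP1 (f : T -> W) : edge_prod w eS f =
  \prod_i edge_prod w (@gE (Hs i)) (fun u => f (emb1 i u)) *
  \prod_(i | c i) \prod_(u : L1 i) \prod_(y : T | gE i (blk1 y)) w (f (emb1 i u)) (f y).
Proof.
have cross : forall x y, eS x y -> blk1 x != blk1 y -> c (blk1 x) != c (blk1 y).
  by move=> x y exy bxy; apply: hc; rewrite -eS_diff.
rewrite (@D1 R W I T blk1 L1 emb1 emb1_inj blk_emb1 emb1_surj w w_sym w_ge0 eS
   (fun i => @gE (Hs i)) c eS_sym eS_irr (fun i => @gE_sym (Hs i)) (fun i => @gE_irr (Hs i))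
   eS_emb1 cross f).
congr (_ * _).
rewrite (eq_bigl (fun p : T * T => c (blk1 p.1) && gE (blk1 p.1) (blk1 p.2))); last first.
  move=> [x y] /=; case: (boolP (blk1 x == blk1 y)) => [/eqP ->|nb].
    by rewrite gE_irr !andbF.
  by rewrite eS_diff // /= andbT.
rewrite -(pair_big_dep (fun x : T => c (blk1 x)) (fun x y : T => gE (blk1 x) (blk1 y))
   (fun x y : T => w (f x) (f y))) /=.
by rewrite (@BP R I T blk1 L1 emb1 emb1_inj blk_emb1 emb1_surj c).
Qed.

Lemma EP2 (f : T * bool -> W) : edge_prod w (tensorK2 eS) f =
  \prod_i edge_prod w (tensorK2 (@gE (Hs i))) (fun q => f (emb2 i q)) *
  \prod_(y : T * bool | ~~ c (blk2 y)) \prod_(i | c i && gE i (blk2 y))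
     \prod_(u : L1 i) w (f (emb2 i (u, ~~ y.2))) (f y).
Proof.
have cross : forall x y, tensorK2 eS x y -> blk2 x != blk2 y -> c (blk2 x) != c (blk2 y).
  by move=> x y /andP [exy _] bxy; apply: hc; rewrite -eS_diff.
have e2 : forall i p q, tensorK2 eS (emb2 i p) (emb2 i q) = tensorK2 (@gE (Hs i)) p q.
  by move=> i p q; rewrite /tensorK2 /= eS_emb1.
rewrite (@D1 R W I (T * bool)%type blk2 L2 emb2 emb2_inj blk_emb2 emb2_surj w w_sym w_ge0 (tensorK2 eS)
   (fun i => tensorK2 (@gE (Hs i))) c (@tK2_sym _ _ eS_sym) (@tK2_irr _ eS)
   (fun i => @tK2_sym _ _ (@gE_sym (Hs i))) (fun i => @tK2_irr _ (@gE (Hs i))) e2 cross f).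
congr (_ * _).
rewrite (eq_bigl (fun p : (T * bool) * (T * bool) =>
   c (blk2 p.1) && (gE (blk2 p.1) (blk2 p.2) && (p.1.2 != p.2.2)))); last first.
  move=> [x y] /=; rewrite /tensorK2; case: (boolP (blk2 x == blk2 y)) => [/eqP ->|nb].
    by rewrite gE_irr !andbF.
  by rewrite eS_diff // /= andbT.
rewrite -(pair_big_dep (fun x : T * bool => c (blk2 x))
   (fun x y : T * bool => gE (blk2 x) (blk2 y) && (x.2 != y.2))
   (fun x y : T * bool => w (f x) (f y))) /=.
rewrite (exchange_big_dep (fun y : T * bool => ~~ c (blk2 y))) /=; last first.
  by move=> x y cx /andP [g _]; have := hc _ _ g; rewrite cx; case: (c _).
apply: eq_bigr => y ny.
rewrite (eq_bigl (fun x : T * bool => (c (blk2 x) && gE (blk2 x) (blk2 y)) && (x.2 != y.2))); last first.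
  by move=> x; rewrite andbA.
rewrite big_mkcondr /=.
rewrite (@BP R I (T * bool)%type blk2 L2 emb2 emb2_inj blk_emb2 emb2_surj (fun i => c i && gE i (blk2 y))
   (fun x => if x.2 != y.2 then w (f x) (f y) else 1)).
apply: eq_bigr => i _; rewrite /L2 prod_pair; apply: eq_bigr => u _.
by rewrite big_bool /=; case: (y.2) => /=; rewrite ?mulr1 ?mul1r.
Qed.

Local Notation supp1 := (@supp W w0 I T blk1).
Local Notation restr1 := (@restr W I T L1 emb1).
Local Notation merge1 := (@merge W I T blk1).
Local Notation supp2 := (@supp W w0 I (T * bool)%type blk2).
Local Notation restr2 := (@restr W I (T * bool)%type L2 emb2).
Local Notation merge2 := (@merge W I (T * bool)%type blk2).

Definition a (i : I) (f : T -> W) (z : W) : R := \prod_(y : T | gE i (blk1 y)) w z (f y).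

Lemma Eq1 : Defs.hom w eS = \sum_(fB | supp1 (predC c) fB)
   (\prod_(j | ~~ c j) edge_prod w (@gE (Hs j)) (restr1 j fB)) *
   \prod_(i | c i) homw w (@gE (Hs i)) (a i fB).
Proof.
rewrite /Defs.hom (@Split R W w0 I T blk1 c); apply: eq_bigr => fB sB.
rewrite /homw -(@GenEq R W w0 I T blk1 L1 emb1 emb1_inj blk_emb1 emb1_surj c
   (fun i g => edge_prod w (@gE (Hs i)) g * \prod_(u : L1 i) a i fB (g u))) mulr_sumr.
apply: eq_bigr => fA sA; rewrite EP1 (bigID c) /= big_split /=.
have E1 : \prod_(i | c i) edge_prod w (@gE (Hs i)) (fun u => merge1 c fA fB (emb1 i u)) =
          \prod_(i | c i) edge_prod w (@gE (Hs i)) (restr1 i fA).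
  by apply: eq_bigr => i ci; apply: edge_prod_ext => u; rewrite !ffunE /= ci.
have E2 : \prod_(i | ~~ c i) edge_prod w (@gE (Hs i)) (fun u => merge1 c fA fB (emb1 i u)) =
          \prod_(i | ~~ c i) edge_prod w (@gE (Hs i)) (restr1 i fB).
  by apply: eq_bigr => i ci; apply: edge_prod_ext => u; rewrite !ffunE /= (negbTE ci).
have E3 : \prod_(i | c i) \prod_(u : L1 i) \prod_(y : T | gE i (blk1 y))
            w (merge1 c fA fB (emb1 i u)) (merge1 c fA fB y) =
          \prod_(i | c i) \prod_(u : L1 i) a i fB (restr1 i fA u).
  apply: eq_bigr => i ci; apply: eq_bigr => u _; rewrite /a; apply: eq_bigr => y gy.
  have /negbTE cy : ~~ c (blk1 y) by have := hc _ _ gy; rewrite ci; case: (c _).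
  by rewrite !ffunE /= ci cy.
by rewrite E1 E2 E3 mulrA [_ * \prod_(i | ~~ c i) _]mulrC.
Qed.

Definition Cross (i : I) (a b : W -> R) : R :=
  \sum_(chi : {ffun gV (Hs i) * bool -> W}) edge_prod w (tensorK2 (@gE (Hs i))) chi *
     \prod_(u : gV (Hs i)) (a (chi (u, true)) * b (chi (u, false))).

Definition h1 (fB : {ffun T -> W}) : R :=
  \prod_(j | ~~ c j) edge_prod w (@gE (Hs j)) (restr1 j fB).

Lemma a_ge0 i f z : 0 <= a i f z.
Proof. by apply: prodr_ge0. Qed.

Lemma homw_ge0 (U : finType) (e : rel U) (b : W -> R) : (forall z, 0 <= b z) -> 0 <= homw w e b.
Proof.
move=> b0; apply: sumr_ge0 => f _.
have h1 := @edge_prod_ge0 R W w w_ge0 U e f.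
have h2 : 0 <= \prod_u b (f u) by apply: prodr_ge0.
exact: (mulr_ge0 h1 h2).
Qed.

Lemma h1_ge0 fB : 0 <= h1 fB.
Proof. by apply: prodr_ge0 => j _; apply: edge_prod_ge0. Qed.

Lemma Step1 : Defs.hom w eS ^+ 2 <=
  \sum_(fB | supp1 (predC c) fB) \sum_(fB' | supp1 (predC c) fB')
     (h1 fB * h1 fB' * \prod_(i | c i) Cross i (a i fB) (a i fB')).
Proof.
rewrite Eq1 expr2 mulr_suml; apply: ler_sum => fB _; rewrite mulr_sumr; apply: ler_sum => fB' _.
rewrite -/(h1 fB) -/(h1 fB') mulrACA.
apply: ler_wpM2l; first by apply: mulr_ge0; apply: h1_ge0.
rewrite -big_split /=.
apply: ler_prod => i ci; apply/andP; split.
  by apply: mulr_ge0; apply: homw_ge0 => z; apply: a_ge0.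
by apply: Hs_swap => z; apply: a_ge0.
Qed.

Definition b (j : I) (PA : {ffun T * bool -> W}) (s : bool) (z : W) : R :=
  \prod_(i | c i && gE i j) \prod_(u : L1 i) w (PA (emb2 i (u, s))) z.

Definition LA (PA : {ffun T * bool -> W}) : R :=
  \prod_(i | c i) edge_prod w (tensorK2 (@gE (Hs i))) (restr2 i PA).

Definition PP (s : bool) (PA : {ffun T * bool -> W}) (fB : {ffun T -> W}) : R :=
  \prod_(i | c i) \prod_(u : L1 i) a i fB (PA (emb2 i (u, s))).

Lemma CrossEq (fB fB' : {ffun T -> W}) : \prod_(i | c i) Cross i (a i fB) (a i fB') =
  \sum_(PA | supp2 c PA) (LA PA * PP true PA fB * PP false PA fB').
Proof.
rewrite /Cross -(@GenEq R W w0 I (T * bool)%type blk2 L2 emb2 emb2_inj blk_emb2 emb2_surj c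
   (fun i g => edge_prod w (tensorK2 (@gE (Hs i))) g *
     \prod_(u : gV (Hs i)) (a i fB (g (u, true)) * a i fB' (g (u, false))))).
apply: eq_bigr => PA _; rewrite big_split /= -mulrA; congr (_ * _).
rewrite /PP -big_split /=; apply: eq_bigr => i _; rewrite -big_split /=.
by apply: eq_bigr => u _; rewrite !ffunE.
Qed.

Lemma MEq s PA : \sum_(fB | supp1 (predC c) fB) h1 fB * PP s PA fB =
  \prod_(j | ~~ c j) homw w (@gE (Hs j)) (b j PA s).
Proof.
rewrite /homw -(@GenEq R W w0 I T blk1 L1 emb1 emb1_inj blk_emb1 emb1_surj (predC c)
   (fun j g => edge_prod w (@gE (Hs j)) g * \prod_(v : L1 j) b j PA s (g v))).
apply: eq_bigr => fB _; rewrite big_split /=; congr (_ * _).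
rewrite /PP /a /b.
under eq_bigr => i _ do rewrite exchange_big /=.
rewrite (exchange_big_dep (fun y : T => ~~ c (blk1 y))) /=; last first.
  by move=> i y ci gy; have := hc _ _ gy; rewrite ci; case: (c _).
rewrite (@BP R I T blk1 L1 emb1 emb1_inj blk_emb1 emb1_surj (fun j => ~~ c j)
   (fun y => \prod_(i | c i && gE i (blk1 y)) \prod_(u : L1 i) w (PA (emb2 i (u, s))) (fB y))).
by apply: eq_bigr => j _; apply: eq_bigr => v _; rewrite ffunE.
Qed.

Lemma Final : Defs.hom w (tensorK2 eS) =
  \sum_(PA | supp2 c PA) LA PA * \prod_(j | ~~ c j) Cross j (b j PA false) (b j PA true).
Proof.
rewrite /Defs.hom (@Split R W w0 I (T * bool)%type blk2 c) exchange_big /=.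
apply: eq_bigr => PA sA.
rewrite /Cross -(@GenEq R W w0 I (T * bool)%type blk2 L2 emb2 emb2_inj blk_emb2 emb2_surj (predC c)
   (fun j g => edge_prod w (tensorK2 (@gE (Hs j))) g *
     \prod_(v : gV (Hs j)) (b j PA false (g (v, true)) * b j PA true (g (v, false))))).
rewrite mulr_sumr; apply: eq_bigr => PB sB.
rewrite EP2 (bigID c) /= big_split /= -!mulrA; congr (_ * _).
  by apply: eq_bigr => i ci; apply: edge_prod_ext => q; rewrite !ffunE /= ci.
congr (_ * _).
  by apply: eq_bigr => i ci; apply: edge_prod_ext => q; rewrite !ffunE /= (negbTE ci).
transitivity (\prod_(j | ~~ c j) \prod_(q : L2 j) b j PA (~~ q.2) (PB (emb2 j q))); last first.
  apply: eq_bigr => j _; rewrite /L2 prod_pair; apply: eq_bigr => v _.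
  by rewrite big_bool /= !ffunE.
rewrite -(@BP R I (T * bool)%type blk2 L2 emb2 emb2_inj blk_emb2 emb2_surj (fun j => ~~ c j)
   (fun y => b (blk2 y) PA (~~ y.2) (PB y))).
apply: eq_bigr => y ny; rewrite /b; apply: eq_bigr => i /andP [ci _]; apply: eq_bigr => u _.
by rewrite !ffunE /= ci (negbTE ny).
Qed.

Lemma b_ge0 j PA s z : 0 <= b j PA s z.
Proof. by apply: prodr_ge0 => *; apply: prodr_ge0 => *; apply: w_ge0. Qed.

Lemma LA_ge0 PA : 0 <= LA PA.
Proof. by apply: prodr_ge0 => i _; apply: edge_prod_ge0. Qed.

Lemma Step2 :
  \sum_(fB | supp1 (predC c) fB) \sum_(fB' | supp1 (predC c) fB')
     (h1 fB * h1 fB' * \prod_(i | c i) Cross i (a i fB) (a i fB'))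
  <= Defs.hom w (tensorK2 eS).
Proof.
rewrite Final.
rewrite [X in X <= _](_ : _ = \sum_(PA | supp2 c PA) LA PA *
   (\sum_(fB | supp1 (predC c) fB) h1 fB * PP true PA fB) *
   (\sum_(fB | supp1 (predC c) fB) h1 fB * PP false PA fB)); last first.
  under eq_bigr => fB _ do under eq_bigr => fB' _ do rewrite CrossEq mulr_sumr.
  under eq_bigr => fB _ do rewrite exchange_big /=.
  rewrite exchange_big /=; apply: eq_bigr => PA _.
  rewrite -mulrA big_distrlr /= mulr_sumr; apply: eq_bigr => fB _.
  rewrite mulr_sumr; apply: eq_bigr => fB' _.
  by ring.
apply: ler_sum => PA _; rewrite !MEq -mulrA -big_split /=.
apply: ler_wpM2l; first exact: LA_ge0.
apply: ler_prod => j _; apply/andP; split.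
  by apply: mulr_ge0; apply: homw_ge0 => z; apply: b_ge0.
by rewrite mulrC; apply: Hs_swap => z; apply: b_ge0.
Qed.

Lemma main_inh : Defs.hom w eS ^+ 2 <= Defs.hom w (tensorK2 eS).
Proof. exact: le_trans Step1 Step2. Qed.

End Main.
Theorem theorem5p4 (R : realType) (W : finType) (w : W -> W -> R)
    (w_sym : forall x y, w x y = w y x) (w_ge0 : forall x y, 0 <= w x y)
    (F : sgraph) (F_bip : bipartite F)
    (Hs : gV F -> sgraph)
    (Hs_swap : forall i, wcb_swapping w (@gE (Hs i))) :
  b_swapping w (@blowup_rel F Hs).
Proof.
case: F_bip => c hc; rewrite /b_swapping.
case: (pickP (@predT W)) => [w0 _|W0].
  exact: (@main_inh R W w w_sym w_ge0 F Hs Hs_swap c hc w0).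
case: (pickP (@predT {i : gV F & gV (Hs i)})) => [x _|T0].
  rewrite /Defs.hom !big1 ?expr2 ?mulr0 // => f _.
    by have := W0 (f (x, true)).
  by have := W0 (f x).
rewrite /Defs.hom.
rewrite (eq_bigr (fun _ => 1)); last by move=> f _; apply: big1 => p; have := T0 p.1.
rewrite [X in _ <= X](eq_bigr (fun _ => 1)); last by move=> f _; apply: big1 => p; have := T0 p.1.1.
by rewrite !sumr_const !card_ffun card_prod (eq_card0 T0) /= !expn0 expr1n.
Qed.
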